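(* Let $F$ be a positive integer and let $p$ be the least positive integer such that $p\nmid F$. Then $$\min\{\mathrm{g}(S)\mid S\in\mathrm{Sat}(F)\}=F-\left\lfloor \frac{F}{p}\right\rfloor.$$
   Context: A numerical semigroup is a subset $S\subseteq\mathbb{N}$ closed under addition, containing $0$, with $\mathbb{N}\setminus S$ finite. Its genus $\mathrm{g}(S)$ is the cardinality of $\mathbb{N}\setminus S$, and its Frobenius number $\mathrm{F}(S)$ is the largest integer not in $S$. For $A\subseteq\mathbb{N}$ and $a\in A$, let $\mathrm{d}_A(a)=\gcd\{x\in A\mid x\le a\}$. A numerical semigroup $S$ is saturated if $s+\mathrm{d}_S(s)\in S$ for all $s\in S\setminus\{0\}$. For a positive integer $F$, $\mathrm{Sat}(F)$ denotes the set of all saturated numerical semigroups $S$ with $\mathrm{F}(S)=F$. *)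

(* Defs.v *)
From mathcomp Require Import all_boot.
Set Implicit Arguments. Unset Strict Implicit. Unset Printing Implicit Defensive.

Definition numerical_semigroup (S : pred nat) : Prop :=
  [/\ S 0,
      (forall x y, S x -> S y -> S (x + y)) &
      exists N, forall n, N <= n -> S n].

Definition frobenius_is (S : pred nat) (F : nat) : Prop :=
  ~~ S F /\ forall n, F < n -> S n.

Definition genus_is (S : pred nat) (g : nat) : Prop :=
  exists N, (forall n, N <= n -> S n) /\ count (predC S) (iota 0 N) = g.

Definition dA (A : pred nat) (a : nat) : nat :=
  \big[gcdn/0]_(x < a.+1 | A x) x.

Definition saturated (S : pred nat) : Prop :=
  numerical_semigroup S /\ forall s, S s -> 0 < s -> S (s + dA S s).

Definition in_Sat (F : nat) (S : pred nat) : Prop :=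
  saturated S /\ frobenius_is S F.

(* Main.v *)
Require Import Defs.
From mathcomp Require Import all_boot zify.
Set Implicit Arguments. Unset Strict Implicit.

Lemma dA_dvd (S : pred nat) y z : S z -> z <= y -> dA S y %| z.
Proof.
move=> Sz zy; rewrite /dA.
have zl : z < y.+1 by [].
exact: (@biggcdn_inf _ (Ordinal zl) (fun i : 'I_y.+1 => S i) (fun i => nat_of_ord i)).
Qed.

Lemma dvd_dA (S : pred nat) y m : (forall z, S z -> z <= y -> m %| z) -> m %| dA S y.
Proof.
move=> H; apply/dvdn_biggcdP => i Si; apply: H => //.
by rewrite -ltnS.
Qed.

Lemma dA_gt0 (S : pred nat) y : S y -> 0 < y -> 0 < dA S y.
Proof.
move=> Sy y0; have := dA_dvd Sy (leqnn y).
case: (dA S y) => // ; rewrite dvd0n; lia.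
Qed.

Lemma key (F : nat) (S : pred nat) : saturated S -> ~~ S F ->
  forall y, S y -> 0 < y -> y < F -> ~~ (dA S y %| F).
Proof.
move=> [_ sat] nSF.
suff H : forall m y, F - y <= m -> S y -> 0 < y -> y < F -> ~~ (dA S y %| F).
  by move=> y; apply: (H (F - y)).
elim=> [|m IH] y hm Sy y0 yF; first lia.
apply/negP => dF.
set d := dA S y in dF.
have d0 : 0 < d by exact: dA_gt0.
have dy : d %| y by exact: dA_dvd.
have dFy : d %| F - y by rewrite dvdn_sub.
have le : d <= F - y by apply: dvdn_leq => //; lia.
have Syd : S (y + d) by exact: sat.
have ne : y + d != F by apply/eqP => E; move: nSF; rewrite -E Syd.
have d'd : dA S (y + d) %| d.
  apply: dvd_dA => z Sz zy; apply: dA_dvd => //; lia.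
have := IH (y + d) ltac:(lia) Syd ltac:(lia) ltac:(lia).
by rewrite (dvdn_trans d'd dF).
Qed.

Lemma dA_ge (F p : nat) (S : pred nat) : saturated S -> ~~ S F ->
  (forall q, 0 < q -> q < p -> q %| F) ->
  forall y, S y -> 0 < y -> y < F -> p <= dA S y.
Proof.
move=> sat nSF hq y Sy y0 yF.
have := key sat nSF Sy y0 yF.
rewrite leqNgt; apply: contra => lt; apply: hq => //; exact: dA_gt0.
Qed.

Lemma count_bound (F p : nat) (S : pred nat) : saturated S -> ~~ S F -> 0 < p ->
  (forall q, 0 < q -> q < p -> q %| F) ->
  forall n, n < F -> count S (iota 1 n) * p <= n.
Proof.
move=> sat nSF p0 hq n.
elim: n {-2}n (leqnn n) => [|N IH] n hn nF.
  by have -> : n = 0 by lia.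
case: n hn nF => [//|m] hn nF.
have e1 : iota 1 m.+1 = iota 1 m ++ [:: m.+1].
  by have := iotaD 1 m 1; rewrite addn1 add1n.
case Sm: (S m.+1).
- have dge := dA_ge sat nSF hq Sm (ltn0Sn m) nF.
  have d0 := dA_gt0 Sm (ltn0Sn m).
  have dm : dA S m.+1 %| m.+1 := dA_dvd Sm (leqnn _).
  have pm : p <= m.+1 by apply: leq_trans dge (dvdn_leq _ dm).
  have e2 : iota 1 m.+1 = iota 1 (m.+1 - p) ++ iota (m.+2 - p) (p.-1) ++ [:: m.+1].
    have -> : m.+2 - p = 1 + (m.+1 - p) by lia.
    rewrite catA. rewrite -iotaD.
    have {1}-> : m.+1 = (m.+1 - p + p.-1) + 1 by lia.
    rewrite iotaD /=; congr (_ ++ [:: _]); lia.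
  have c0 : count S (iota (m.+2 - p) p.-1) = 0.
    apply/eqP; rewrite -leqn0 leqNgt -has_count; apply/negP => /hasP [z].
    rewrite mem_iota => /andP [z1 z2] Sz.
    have dz : dA S m.+1 %| z by apply: dA_dvd; lia.
    have : dA S m.+1 %| m.+1 - z by rewrite dvdn_sub.
    move/dvdn_leq; have : 0 < m.+1 - z by lia.
    move=> h /(_ h); lia.
  have := IH (m.+1 - p) ltac:(lia) ltac:(lia).
  rewrite e2 !count_cat c0 /= Sm; lia.
- have := IH m ltac:(lia) ltac:(lia).
  rewrite e1 count_cat /= Sm; lia.
Qed.

Lemma count_dvd p n : 0 < p -> count (fun k => p %| k) (iota 0 n.+1) = (n %/ p).+1.
Proof.
move=> p0; elim: n => [|n IH]; first by rewrite /= dvdn0 div0n.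
have := iotaD 0 n.+1 1; rewrite addn1 => ->.
by rewrite count_cat IH /= add0n (divnS _ p0) addn0; lia.
Qed.

Theorem corollary32 (F p : nat) :
  0 < F ->
  0 < p -> ~~ (p %| F) -> (forall q, 0 < q -> q < p -> q %| F) ->
  (exists S : pred nat, in_Sat F S /\ genus_is S (F - F %/ p)) /\
  (forall (S : pred nat) (g : nat), in_Sat F S -> genus_is S g -> F - F %/ p <= g).
Proof.
move=> F0 p0 npF hq; split.
- pose S : pred nat := fun n => (p %| n) || (F < n).
  have SF : ~~ S F by rewrite /S (negbTE npF) ltnn.
  exists S; split; [split; [split|] |].
  + split; first by rewrite /S dvdn0.
    * move=> x y; rewrite /S => /orP [hx|hx] /orP [hy|hy].
      - by rewrite dvdn_add.
      - by apply/orP; right; lia.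
      - by apply/orP; right; lia.
      - by apply/orP; right; lia.
    * by exists F.+1 => n hn; rewrite /S; apply/orP; right; lia.
  + move=> s Ss s0; case: (ltnP F s) => Fs; first by rewrite /S; apply/orP; right; lia.
    have ps : p %| s by move: Ss; rewrite /S ltnNge Fs orbF.
    have pd : p %| dA S s.
      apply: dvd_dA => z; rewrite /S => /orP [//|hz] zs; lia.
    by rewrite /S dvdn_add.
  + split=> // n hn; rewrite /S; apply/orP; right; lia.
  + exists F.+1; split; first by move=> n hn; rewrite /S; apply/orP; right; lia.
    have e : count (predC S) (iota 0 F.+1) = count (predC (fun k => p %| k)) (iota 0 F.+1).
      apply: eq_in_count => z; rewrite mem_iota => /andP [_ hz].
      by rewrite /= /S (_ : F < z = false) ?orbF //; lia.
    have := count_predC (fun k => p %| k) (iota 0 F.+1).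
    rewrite e count_dvd // size_iota; lia.
- move=> S g [sat [nSF _]] [N [hN <-]].
  have NF : F < N by rewrite ltnNge; apply/negP => h; move: nSF; rewrite hN.
  have c := count_bound sat nSF p0 hq (n := F.-1) ltac:(lia).
  have -> : N = F.+1 + (N - F.+1) by lia.
  rewrite iotaD count_cat.
  have -> : F.+1 = 1 + (F.-1 + 1) by lia.
  rewrite iotaD iotaD !count_cat /=.
  have -> : 1 + F.-1 = F by lia.
  rewrite nSF !add0n.
  have := count_predC S (iota 1 F.-1); rewrite size_iota.
  have : count S (iota 1 F.-1) <= F %/ p.
    by rewrite leq_divRL //; lia.
  lia.
Qed.
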